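(* Let $n\ge 3$. The prism $C_n\times K_2$ is $(a,d)$-distance antimagic for some integers $a$ and $d\ge0$ if and only if $d=1$.
   Context: The prism $C_n\times K_2$ is the Cartesian product of the cycle $C_n$ and $K_2$: it has vertices $x_1,\dots,x_n,y_1,\dots,y_n$, with $x_1\cdots x_nx_1$ and $y_1\cdots y_ny_1$ cycles and additional edges $x_iy_i$ for $i=1,\dots,n$; it is $3$-regular of order $2n$. For a graph $G=(V,E)$ with $v=|V|$ and a bijection $f:V\to\{1,\dots,v\}$, the vertex-weight of $x$ is $w(x)=\sum_{y\in N(x)}f(y)$ with $N(x)$ the set of neighbours of $x$. For integers $a$ and $d\ge0$, $f$ is an $(a,d)$-distance antimagic labeling if the multiset of vertex-weights equals $\{a,a+d,\dots,a+(v-1)d\}$; $G$ is $(a,d)$-distance antimagic if it admits such a labeling. *)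

(* Defs.v *)
From mathcomp Require Import all_boot all_order all_algebra.
Set Implicit Arguments. Unset Strict Implicit. Unset Printing Implicit Defensive.
Import GRing.Theory Num.Theory.

Definition is_vertex_labeling (T : finType) (f : T -> nat) : Prop :=
  injective f /\ forall x : T, 0 < f x <= #|T|.

Definition vweight (T : finType) (e : rel T) (f : T -> nat) (x : T) : nat :=
  \sum_(y : T | e x y) f y.

Definition dist_antimagic_labeling (T : finType) (e : rel T) (a : int) (d : nat)
    (f : T -> nat) : Prop :=
  is_vertex_labeling f /\
  perm_eq [seq (Posz (vweight e f x)) | x <- enum T]
          [seq (a + Posz i * Posz d)%R | i <- iota 0 #|T|].

Definition dist_antimagic (T : finType) (e : rel T) (a : int) (d : nat) : Prop :=
  exists f : T -> nat, dist_antimagic_labeling e a d f.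

(* The prism C_n x K_2: vertex (i, false) is x_{i+1}, (i, true) is y_{i+1}. *)
Definition prism_vertex (n : nat) : finType := ('I_n * bool)%type.

Definition prism_adj (n : nat) : rel (prism_vertex n) :=
  fun u v =>
    ((u.2 == v.2) && ((val v.1 == (val u.1).+1 %% n) || (val u.1 == (val v.1).+1 %% n)))
    || ((u.1 == v.1) && (u.2 != v.2)).

(* Main.v *)
Require Import Defs.
From mathcomp Require Import all_boot all_order all_algebra zify.
Set Implicit Arguments. Unset Strict Implicit. Unset Printing Implicit Defensive.
Import GRing.Theory.

Section S.
Variable m : nat.
Local Notation N := m.+3.
Local Notation V := (prism_vertex N).

Definition nxt (u : V) : V := (inord (if (val u.1).+1 == N then 0 else (val u.1).+1), u.2).
Definition prv (u : V) : V := (inord (if val u.1 == 0 then N.-1 else (val u.1).-1), u.2).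
Definition flp (u : V) : V := (u.1, ~~ u.2).

Lemma succ_mod (k : 'I_N) : (k.+1 %% N) = if k.+1 == N then 0 else k.+1.
Proof.
have := ltn_ord k; case: eqP => [->|h] hk; first by rewrite modnn.
by rewrite modn_small //; lia.
Qed.

Lemma adjE u v : prism_adj u v = [|| v == nxt u, v == prv u | v == flp u].
Proof.
case: u => [i b]; case: v => [j c].
rewrite /prism_adj /nxt /prv /flp /= !xpair_eqE -!val_eqE /= !inordK; last first.
- by case: eqP => h; have := ltn_ord i; lia.
- by case: eqP => h; have := ltn_ord i; lia.
rewrite !succ_mod.
have := ltn_ord i; have := ltn_ord j.
move=> hj hi; do 3 (case: ifP => /eqP ?);
  case: b; case: c => /=; case: eqP => h1; case: eqP => h2; case: eqP => h3;
  apply/idP/idP; lia.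
Qed.

Lemma nxt_prv u : nxt u != prv u.
Proof.
case: u => [i b]; rewrite /nxt /prv xpair_eqE /= eqxx andbT -val_eqE /= !inordK.
  all: (have hi := ltn_ord i; repeat (case: ifP => /eqP ?); lia).
Qed.

Lemma nxt_flp u : nxt u != flp u.
Proof. by case: u => [i b]; rewrite /nxt /flp xpair_eqE /=; case: b; rewrite andbF. Qed.

Lemma prv_flp u : prv u != flp u.
Proof. by case: u => [i b]; rewrite /prv /flp xpair_eqE /=; case: b; rewrite andbF. Qed.

Lemma vweightE (f : V -> nat) u :
  vweight (@prism_adj N) f u = f (nxt u) + f (prv u) + f (flp u).
Proof.
rewrite /vweight (eq_bigl (fun y => y \in [:: nxt u; prv u; flp u])); last first.
  by move=> y; rewrite adjE !inE.
rewrite -big_uniq /=; last by rewrite !inE negb_or nxt_prv nxt_flp prv_flp.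
by rewrite !big_cons big_nil addn0 addnA.
Qed.

Lemma prv_nxt u : prv (nxt u) = u.
Proof.
case: u => [i b]; rewrite /nxt /prv /=; congr pair; apply: val_inj => /=.
have hi := ltn_ord i.
rewrite (@inordK _ (if i.+1 == N then 0 else i.+1)); last by case: ifP => /eqP ?; lia.
rewrite inordK; last by repeat (case: ifP => /eqP ?); lia.
by case: (i.+1 =P N) => h /=; repeat (case: ifP => /eqP ?); lia.
Qed.

Lemma nxt_prv' u : nxt (prv u) = u.
Proof.
case: u => [i b]; rewrite /nxt /prv /=; congr pair; apply: val_inj => /=.
have hi := ltn_ord i.
rewrite (@inordK _ (if nat_of_ord i == 0 then m.+2 else i.-1)); last by case: ifP => /eqP ?; lia.
rewrite inordK; last by case: (nat_of_ord i =P 0) => h /=; repeat (case: ifP => /eqP ?); lia.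
by case: (nat_of_ord i =P 0) => h /=; repeat (case: ifP => /eqP ?); lia.
Qed.

Lemma flpK u : flp (flp u) = u.
Proof. by case: u => [i b]; rewrite /flp /= negbK. Qed.

Lemma nxt_inj : injective nxt. Proof. exact: can_inj prv_nxt. Qed.
Lemma prv_inj : injective prv. Proof. exact: can_inj nxt_prv'. Qed.
Lemma flp_inj : injective flp. Proof. exact: can_inj flpK. Qed.

Lemma sum3 (f : V -> nat) :
  \sum_(u <- enum V) vweight (@prism_adj N) f u = 3 * \sum_(u <- enum V) f u.
Proof.
have E : forall F : V -> nat, \sum_(u <- enum V) F u = \sum_u F u.
  by move=> F; rewrite big_enum; apply: eq_bigl => x.
have e1 : \sum_(u : V) f (nxt u) = \sum_u f u by rewrite [RHS](reindex_inj nxt_inj).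
have e2 : \sum_(u : V) f (prv u) = \sum_u f u by rewrite [RHS](reindex_inj prv_inj).
have e3 : \sum_(u : V) f (flp u) = \sum_u f u by rewrite [RHS](reindex_inj flp_inj).
rewrite !E (eq_bigr _ (fun u _ => vweightE f u)) !big_split e1 e2 e3.
set S := \sum_u f u; change (S + S + S = 3 * S); lia.
Qed.

Definition lab (u : V) : nat :=
  if u.2 then (if val u.1 == 0 then N.+1 else N.*2.+1 - val u.1) else (val u.1).+1.
Definition gidx (u : V) : nat :=
  if u.2 then (if val u.1 == 0 then N.+1 else if val u.1 == 1 then N else N.*2.+1 - val u.1)
  else (if (val u.1).+1 == N then 0 else (val u.1).+1).

Lemma cardV : #|V| = N * 2.
Proof. by rewrite card_prod card_ord card_bool. Qed.

Lemma lab_ok : is_vertex_labeling lab.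
Proof.
split.
  move=> [i b] [j c]; rewrite /lab /=; have hi := ltn_ord i; have hj := ltn_ord j.
  case: b; case: c => /=; repeat (case: ifP => /eqP ?); move=> h;
   try (exfalso; lia); congr (_, _); apply: val_inj => /=; lia.
move=> [i b]; rewrite cardV /lab /=; have hi := ltn_ord i.
case: b; repeat (case: ifP => /eqP ?); lia.
Qed.

Lemma gidx_inj : injective gidx.
Proof.
  move=> [i b] [j c]; rewrite /gidx /=; have hi := ltn_ord i; have hj := ltn_ord j.
  case: b; case: c => /=; repeat (case: ifP => /eqP ?); move=> h;
   try (exfalso; lia); congr (_, _); apply: val_inj => /=; lia.
Qed.

Lemma gidx_lt u : 0 <= gidx u < 0 + #|V|.
Proof.
case: u => [i b]; rewrite cardV /gidx /=; have hi := ltn_ord i.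
case: b; repeat (case: ifP => /eqP ?); lia.
Qed.

Lemma weight_lab u : vweight (@prism_adj N) lab u = N.*2.+2 + gidx u.
Proof.
rewrite vweightE; case: u => [i b]; rewrite /lab /gidx /nxt /prv /flp /=.
have hi := ltn_ord i.
rewrite (@inordK _ (if i.+1 == N then 0 else i.+1)); last by case: ifP => /eqP ?; lia.
rewrite (@inordK _ (if nat_of_ord i == 0 then m.+2 else i.-1)); last by case: ifP => /eqP ?; lia.
case: (i.+1 =P N) => h1; case: (nat_of_ord i =P 0) => h2;
case: b => /=; repeat (case: ifP => /eqP ?); lia.
Qed.
End S.

Lemma perm_iota_gen (T : finType) (g : T -> nat) k : injective g ->
  (forall x, k <= g x < k + #|T|) -> perm_eq (map g (enum T)) (iota k #|T|).
Proof.
move=> ginj grng; apply: uniq_perm; first by rewrite map_inj_uniq ?enum_uniq.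
  exact: iota_uniq.
have U : uniq (map g (enum T)) by rewrite map_inj_uniq ?enum_uniq.
have Sb : {subset map g (enum T) <= iota k #|T|}.
  by move=> y /mapP [x _ ->]; rewrite mem_iota.
have Z : size (iota k #|T|) <= size (map g (enum T)) by rewrite size_map size_iota -cardE.
by have [_] := uniq_min_size U Sb Z.
Qed.

Lemma sumPosz (I : Type) (s : seq I) (F : I -> nat) :
  Posz (\sum_(i <- s) F i) = (\sum_(i <- s) Posz (F i))%R.
Proof. by rewrite (big_morph Posz PoszD erefl). Qed.

Lemma sum_iota1 v : 2 * \sum_(i <- iota 1 v) i = v * v.+1.
Proof.
elim: v => [|v IH]; first by rewrite big_nil.
have -> : iota 1 v.+1 = iota 1 v ++ [:: 1 + v] by rewrite -[v.+1]addn1 iotaD.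
rewrite big_cat /= big_cons big_nil; lia.
Qed.

Lemma sum_ap (a : int) (d v : nat) :
  (2 * \sum_(i <- iota 0 v) (a + Posz i * Posz d) = Posz v * (2 * a + Posz d * (Posz v - 1)))%R.
Proof.
elim: v => [|v IH]; first by rewrite big_nil mulr0 mul0r.
have -> : iota 0 v.+1 = iota 0 v ++ [:: v] by rewrite -[v.+1]addn1 iotaD.
rewrite big_cat big_cons big_nil.
move: IH; set S := (\sum_(i <- iota 0 v) _)%R => IH; rewrite /= in IH *; nia.
Qed.


Theorem mainTheorem9 (n : nat) (hn : 3 <= n) (d : nat) :
  (exists a : int, dist_antimagic (@prism_adj n) a d) <-> d = 1.
Proof.
have [m em] : exists m, n = m.+3 by exists (n - 3); lia.
subst n.
split.
- move=> [a [f [[finj frng] P]]].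
  have hv := cardV m.
  have wb : forall u, 6 <= vweight (@prism_adj m.+3) f u <= 3 * #|prism_vertex m.+3| - 3.
    move=> u; rewrite vweightE.
    have /eqP h1 : f (nxt u) != f (prv u) by rewrite (inj_eq finj) nxt_prv.
    have /eqP h2 : f (nxt u) != f (flp u) by rewrite (inj_eq finj) nxt_flp.
    have /eqP h3 : f (prv u) != f (flp u) by rewrite (inj_eq finj) prv_flp.
    have := frng (nxt u); have := frng (prv u); have := frng (flp u); lia.
  have : (a + Posz 0 * Posz d)%R \in
      [seq (a + Posz i * Posz d)%R | i <- iota 0 #|prism_vertex m.+3|].
    by apply: map_f; rewrite mem_iota hv.
  rewrite -(perm_mem P) => /mapP [x _ hx].
  have : (a + Posz (#|prism_vertex m.+3| - 1) * Posz d)%R \in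
      [seq (a + Posz i * Posz d)%R | i <- iota 0 #|prism_vertex m.+3|].
    by apply: map_f; rewrite mem_iota hv; lia.
  rewrite -(perm_mem P) => /mapP [y _ hy].
  have hs : (\sum_(z <- [seq Posz (vweight (@prism_adj m.+3) f x)
                      | x <- enum (prism_vertex m.+3)]) z
           = \sum_(z <- [seq (a + Posz i * Posz d)%R | i <- iota 0 #|prism_vertex m.+3|]) z)%R.
    by apply: perm_big.
  rewrite !big_map -sumPosz -enumT sum3 in hs.
  have pf : perm_eq (map f (enum (prism_vertex m.+3))) (iota 1 #|prism_vertex m.+3|).
    by apply: perm_iota_gen => // u; have := frng u; lia.
  have hl : \sum_(i <- map f (enum (prism_vertex m.+3))) i
            = \sum_(i <- iota 1 #|prism_vertex m.+3|) i by apply: perm_big.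
  rewrite big_map in hl.
  have h2 := sum_ap a d #|prism_vertex m.+3|.
  have h1 := sum_iota1 #|prism_vertex m.+3|.
  rewrite -hl in h1; rewrite -hs in h2.
  have wx := wb x; have wy := wb y.
  clear hs hl pf P wb.
  move: (\sum_(u <- enum _) f u) h1 h2 => S h1 h2.
  move: (vweight _ f x) (vweight _ f y) hx hy wx wy => wx wy hx hy wx' wy'.
  rewrite hv in h1 h2 hy wx' wy'.
  have key : (Posz (m.+3 * 2) * (3 * (Posz (m.+3 * 2) + 1) - 2 * a - Posz d * (Posz (m.+3 * 2) - 1)) = 0)%R.
    nia.
  move/eqP: key; rewrite mulf_eq0 => /orP [/eqP hv0|/eqP key]; first by lia.
  rewrite mul0r addr0 in hx.
  clear h1 h2.
  case: d hy key => [|[|[|d]]] hy key //; lia.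
- move=> ->; exists (Posz (m.+3).*2.+2); exists (@lab m); split; first exact: lab_ok.
  rewrite (_ : [seq Posz (vweight (@prism_adj m.+3) (@lab m) x) | x <- enum (prism_vertex m.+3)]
     = map (fun k => Posz ((m.+3).*2.+2 + k)) (map (@gidx m) (enum (prism_vertex m.+3)))); last first.
    by rewrite -map_comp; apply: eq_map => x /=; rewrite weight_lab.
  rewrite (_ : [seq (Posz (m.+3).*2.+2 + Posz i * Posz 1)%R | i <- iota 0 #|prism_vertex m.+3|]
     = map (fun k => Posz ((m.+3).*2.+2 + k)) (iota 0 #|prism_vertex m.+3|)); last first.
    by apply: eq_map => i /=; rewrite mulr1 PoszD.
  apply: perm_map; apply: perm_iota_gen; [exact: gidx_inj | exact: gidx_lt].
Qed.
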